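(* Let $K$ be a self-similar compact set of ratio $\rho$ and module $\mu$, and put $T_u=K^{(u)}\setminus K^{(u+1)}$ for $u\ge0$. Then for every integer $n\ge1$ and every ordinal $0\le\alpha\le\omega^\omega$, $K^{(n)}[\alpha]=K[\omega^n(1+\alpha)]$. Moreover, for every ordinal $0\le\alpha<\omega^\omega$, \[T_0[\alpha]=\begin{cases}K[\alpha]&\text{if }\alpha<\omega,\\ K[\alpha+1]&\text{if }\alpha\ge\omega,\end{cases}\qquad\text{and}\qquad T_u[\alpha]=K[\omega^u(\alpha+1)]\ \text{ for } u\ge1.\]
   Context: For $A\subset\mathbf{R}$, $A'$ denotes the derived set of $A$, $A^{(0)}=A$, $A^{(n+1)}=(A^{(n)})'$. The reverse usual order is $x\preccurlyeq y$ iff $x\ge y$. A self-similar compact set of ratio $\rho>1$ and module $\mu\in\mathbf{N}$ is a compact set $K\subset[0,+\infty)$ with $\rho K^{(\mu)}=K$, well ordered by $\preccurlyeq$, of order type $\omega^\omega+1$. For a set $L\subset\mathbf{R}$ well ordered by $\preccurlyeq$ and an ordinal $\alpha$ less than its order type, $L[\alpha]$ denotes the element of $L$ in position $\alpha$ for $\preccurlyeq$ (positions start at $0$). Ordinal arithmetic is the standard one. *)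

(* Defs.v *)
From Stdlib Require Import Reals.
From mathcomp Require Import all_boot.
Set Implicit Arguments. Unset Strict Implicit. Unset Printing Implicit Defensive.

(* An ordinal < omega^omega is w^k*c_k + ... + w*c_1 + c_0 (c_i in N); *)
(* it is represented by the little-endian list [c_0; c_1; ...; c_k]  *)
(* without trailing zeros (canonical Cantor normal form).             *)

Fixpoint strip (s : seq nat) : seq nat :=
  if s is x :: s' then
    let t := strip s' in if (t == [::]) && (x == 0) then [::] else x :: t
  else [::].

Lemma strip_idem s : strip (strip s) = strip s.
Proof.
elim: s => //= x s IH; case: ifP => [_|H] //=; by rewrite IH H.
Qed.

Record cnf := CNF { cval : seq nat; cval_canon : strip cval == cval }.

Definition mkc (s : seq nat) : cnf := @CNF (strip s) (introT eqP (strip_idem s)).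

Fixpoint lexlt (s t : seq nat) : bool :=
  match s, t with
  | x :: s', y :: t' => (x < y) || ((x == y) && lexlt s' t')
  | _, _ => false
  end.

(* strict order on canonical normal forms: higher degree is bigger, then
   compare coefficients from the highest exponent down *)
Definition cltb (a b : cnf) : bool :=
  let s := cval a in let t := cval b in
  (size s < size t) || ((size s == size t) && lexlt (rev s) (rev t)).

(* ordinal addition on normal forms: alpha + beta, where beta has leading
   exponent k: keep the terms of alpha of exponent > k, add the
   coefficients at exponent k, and take the lower terms of beta *)
Definition radd (s t : seq nat) : seq nat :=
  let t' := strip t in
  if t' is [::] then s else
  let k := (size t').-1 in
  take k t' ++ (nth 0 s k + nth 0 t' k) :: drop k.+1 s.

(* ordinal multiplication on normal forms: for alpha <> 0 of degree d with
   leading coefficient a_d, and beta = w^k b_k + ... + b_0,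
   alpha * beta = w^(d+k) b_k + ... + w^(d+1) b_1 + alpha * b_0, where
   alpha * b_0 = w^d (a_d b_0) + (lower terms of alpha) if b_0 > 0. *)
Definition rmul (s t : seq nat) : seq nat :=
  let s' := strip s in let t' := strip t in
  if s' is [::] then [::] else
  let d := (size s').-1 in
  (if head 0 t' == 0 then nseq d.+1 0
   else take d s' ++ [:: last 0 s' * head 0 t']) ++ behead t'.

Definition cadd (a b : cnf) : cnf := mkc (radd (cval a) (cval b)).
Definition cmul (a b : cnf) : cnf := mkc (rmul (cval a) (cval b)).

(* ordinals <= omega^omega; OTop is omega^omega *)
Inductive ordw := OFin of cnf | OTop.

Definition ordlt (a b : ordw) : bool :=
  match a, b with
  | OFin x, OFin y => cltb x y
  | OFin _, OTop => true
  | OTop, _ => false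
  end.

Definition ozero : ordw := OFin (mkc [::]).
Definition onat (n : nat) : ordw := OFin (mkc [:: n]).
Definition opow (n : nat) : ordw := OFin (mkc (rcons (nseq n 0) 1)).
Definition omega : ordw := opow 1.

(* They are exact whenever the true result is
   <= omega^omega; results that would exceed omega^omega (only possible
   when the left argument is OTop) are saturated to OTop, and never occur
   in the statement. *)
Definition oadd (a b : ordw) : ordw :=
  match a, b with
  | OFin x, OFin y => OFin (cadd x y)
  | _, _ => OTop
  end.

Definition omul (a b : ordw) : ordw :=
  match a, b with
  | OFin x, OFin y => OFin (cmul x y)
  | OFin x, OTop => if cval x is [::] then ozero else OTop
  | OTop, OFin y => if cval y is [::] then ozero else OTop
  | OTop, OTop => OTop
  end.

Local Open Scope R_scope.

Definition derived (A : R -> Prop) : R -> Prop :=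
  fun x => forall eps, 0 < eps -> exists y, A y /\ y <> x /\ Rabs (y - x) < eps.

Fixpoint deriv_n (n : nat) (A : R -> Prop) : R -> Prop :=
  match n with O => A | S n' => derived (deriv_n n' A) end.

Definition rev_iso (L : R -> Prop) (P : ordw -> Prop) (f : R -> ordw) : Prop :=
  (forall x, L x -> P (f x)) /\
  (forall b, P b -> exists x, L x /\ f x = b) /\
  (forall x y, L x -> L y -> (y < x <-> ordlt (f x) (f y))).

(* kpos L a x : x is the element of L in position a for the reverse order,
   i.e. x in L and {y in L | y "precedes" x} = {y in L | y > x} has order
   type a. *)
Definition kpos (L : R -> Prop) (a : ordw) (x : R) : Prop :=
  L x /\ exists f, rev_iso (fun y => L y /\ x < y) (fun b => ordlt b a) f.

(* L is well ordered by the reverse order with order type omega^omega + 1,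
   i.e. isomorphic to all of ordw = {ordinals <= omega^omega} *)
Definition type_ww1 (L : R -> Prop) : Prop :=
  exists f, rev_iso L (fun _ => True) f.

Definition self_similar (K : R -> Prop) (rho : R) (mu : nat) : Prop :=
  1 < rho /\
  compact K /\
  (forall x, K x -> 0 <= x) /\
  (forall x, K x <-> exists y, deriv_n mu K y /\ x = rho * y) /\
  type_ww1 K.

Definition Tset (K : R -> Prop) (u : nat) : R -> Prop :=
  fun x => deriv_n u K x /\ ~ deriv_n u.+1 K x.

(* Main.v *)
Require Import Defs.
From Stdlib Require Import Reals Lra Classical ClassicalEpsilon.
From mathcomp Require Import all_boot zify.
Set Implicit Arguments. Unset Strict Implicit. Unset Printing Implicit Defensive.
Definition cn (a : cnf) i := nth 0 (cval a) i.

Lemma nth_strip s i : nth 0 (strip s) i = nth 0 s i.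
Proof.
elim: s i => [|x s IH] i //=.
case: ifP => [/andP[/eqP H /eqP ->]|_].
- case: i => [|i] //=. by rewrite -IH H nth_nil.
- by case: i.
Qed.

Lemma canon_cons x s : strip (x :: s) = x :: s -> strip s = s.
Proof. move=> /=; case: ifP => // _; by case. Qed.

Lemma canon_last s : strip s = s -> s != [::] -> nth 0 s (size s).-1 != 0.
Proof.
elim: s => [|x s IH] // Hc _.
have Hs := canon_cons Hc.
case: s IH Hc Hs => [|y s] IH Hc Hs /=.
- by case: x Hc.
- exact: (IH Hs isT).
Qed.

Lemma canon_eq s t : strip s = s -> strip t = t ->
  (forall i, nth 0 s i = nth 0 t i) -> s = t.
Proof.
move=> Hs Ht E.
have Hsz : size s = size t.
  apply/eqP; rewrite eqn_leq; apply/andP; split; rewrite leqNgt; apply/negP => Hlt.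
  - have Hne : s != [::] by case: s Hs E Hlt.
    have := canon_last Hs Hne. rewrite E nth_default //. lia.
  - have Hne : t != [::] by case: t Ht E Hlt.
    have := canon_last Ht Hne. rewrite -E nth_default //. lia.
apply: (eq_from_nth (x0 := 0)) => // i _; exact: E.
Qed.

Lemma cnf_eq (a b : cnf) : cval a = cval b -> a = b.
Proof.
case: a b => s Hs [t Ht] /= E; subst t. f_equal; exact: eq_irrelevance.
Qed.

Lemma canonP (a : cnf) : strip (cval a) = cval a.
Proof. exact/eqP/cval_canon. Qed.

Lemma cnf_ext (a b : cnf) : (forall i, cn a i = cn b i) -> a = b.
Proof. move=> E; apply: cnf_eq; apply: canon_eq; [exact: canonP|exact: canonP|exact: E]. Qed.

Lemma cn_mkc s i : cn (mkc s) i = nth 0 s i.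
Proof. exact: nth_strip. Qed.

Definition ltf (f g : nat -> nat) := exists i, f i < g i /\ forall j, i < j -> f j = g j.

Lemma lexlt_ex u v : lexlt u v -> exists k, k < size u /\ nth 0 u k < nth 0 v k /\
   forall j, j < k -> nth 0 u j = nth 0 v j.
Proof.
elim: u v => [|x u IH] [|y v] //= /orP[H|/andP[/eqP E H]].
- by exists 0.
- have [k [H1 [H2 H3]]] := IH _ H. exists k.+1; split=> //; split=> //.
  move=> [|j] Hj /=; [by rewrite E | exact: H3].
Qed.

Lemma ex_lexlt u v k : size u = size v -> k < size u -> nth 0 u k < nth 0 v k ->
  (forall j, j < k -> nth 0 u j = nth 0 v j) -> lexlt u v.
Proof.
elim: u v k => [|x u IH] [|y v] k //=.
move=> [Hs] Hk Hlt Heq.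
case: k Hk Hlt Heq => [|k] Hk Hlt Heq /=; first by rewrite Hlt.
apply/orP; right; apply/andP; split.
- by have := Heq 0 isT => /= ->.
- apply: (IH _ k) => // j Hj. exact: (Heq j.+1).
Qed.

Lemma cltbP a b : cltb a b <-> ltf (cn a) (cn b).
Proof.
rewrite /cltb /cn.
have Hs := canonP a; have Ht := canonP b.
move: (cval a) (cval b) Hs Ht => s t Hs Ht.
split.
- move/orP => [Hlt | /andP[/eqP Hsz Hlex]].
  + have Hne : t != [::] by case: t Ht Hlt.
    have := canon_last Ht Hne => H0.
    exists (size t).-1; split.
    * rewrite (nth_default _ (s := s)); [lia|lia].
    * move=> j Hj; rewrite !nth_default //; lia.
  + have [k [Hk [H1 H2]]] := lexlt_ex Hlex.
    rewrite size_rev in Hk.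
    exists (size s - k.+1); split.
    * move: H1; rewrite !nth_rev ?size_rev //; last lia. by rewrite Hsz.
    * move=> j Hj. case: (ltnP j (size s)) => Hjs.
      - have := H2 (size s - j.+1) ltac:(lia). rewrite !nth_rev; try lia.
        have -> : size s - (size s - j.+1).+1 = j by lia.
        by rewrite -Hsz; have -> : size s - (size s - j.+1).+1 = j by lia.
      - rewrite !nth_default //; lia.
- move=> [i [Hi Heq]].
  case: (ltngtP (size s) (size t)) => H //.
  + exfalso.
    have Hne : s != [::] by apply/eqP => E; move: H; rewrite E /= ltn0.
    have := canon_last Hs Hne => H0.
    case: (ltnP i (size s).-1) => Hm.
    * have := Heq _ Hm. rewrite (nth_default _ (s := t)); [lia|lia].
    * move: Hi; rewrite (nth_default _ (s := t)); [lia|lia].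
  + rewrite /=.
    have Hit : i < size t by case: (ltnP i (size t)) Hi => // ?; rewrite (nth_default _ (s := t)).
    apply: (ex_lexlt (k := size s - i.+1)); rewrite ?size_rev //; first lia.
    * rewrite !nth_rev ?size_rev; try lia. rewrite -H.
      by have -> : size s - (size s - i.+1).+1 = i by lia.
    * move=> j Hj. rewrite !nth_rev; try lia. rewrite -H. apply: Heq. lia.
Qed.
Lemma cn_succ s i : cn (cadd s (mkc [:: 1])) i = if i == 0 then (cn s 0).+1 else cn s i.
Proof.
rewrite /cadd cn_mkc /radd /=.
case: i => [|i] /=; first by rewrite addn1.
by rewrite nth_drop.
Qed.

Definition sm (c : cnf) := size (cval c) <= 1.

Lemma take_last_nth (l : seq nat) : l != [::] -> take (size l).-1 l ++ [:: nth 0 l (size l).-1] = l.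
Proof.
case/lastP: l => [|p z] // _.
by rewrite size_rcons /= -cats1 take_size_cat // nth_cat ltnn subnn.
Qed.

Lemma cn_oneplus s i : cn (cadd (mkc [:: 1]) s) i = if (i == 0) && sm s then (cn s 0).+1 else cn s i.
Proof.
rewrite /cadd cn_mkc /radd /= canonP /cn /sm.
case: (cval s) => [|x r] /=.
- by case: i => [|[|i]].
- case: r => [|y r] /=.
  + by case: i => [|[|i]] //=; rewrite add1n.
  + have := take_last_nth (l := x :: y :: r) isT. rewrite /= => H.
    by rewrite nth_nil add0n H andbF.
Qed.

Lemma strip_pow n : strip (rcons (nseq n 0) 1) = rcons (nseq n 0) 1.
Proof. elim: n => //= n ->; by case: n. Qed.

Lemma cn_mulpow n u i : cn (cmul (mkc (rcons (nseq n 0) 1)) u) i = if i < n then 0 else cn u (i - n).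
Proof.
rewrite /cmul cn_mkc /rmul /= !strip_pow canonP.
case E: (rcons (nseq n 0) 1) => [|x r]; first by case: (nseq n 0) E.
rewrite -E size_rcons size_nseq /= -cats1 take_size_cat ?size_nseq // last_cat /= /cn.
have Hn : 0 :: nseq n 0 = rcons (nseq n 0) 0 by elim: n {E} => //= n ->.
have Hcat : forall l, nth 0 (nseq n 0 ++ l) i = if i < n then 0 else nth 0 l (i - n).
  move=> l; rewrite nth_cat size_nseq nth_nseq. by case: (i < n).
case: (cval u) => [|y l] /=.
- rewrite -cat_cons Hn cat_rcons Hcat; case: (i < n) => //; by case: (i - n) => [|[]].
- case: eqP => [->|_] /=.
  + by rewrite -cat_cons Hn cat_rcons Hcat.
  + by rewrite -catA /= mul1n Hcat.
Qed.

Lemma ltE a b : ordlt (OFin a) (OFin b) <-> ltf (cn a) (cn b).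
Proof. exact: cltbP. Qed.

Lemma smP (c : cnf) : sm c <-> forall j, cn c j.+1 = 0.
Proof.
rewrite /sm /cn; split.
- move=> H j; rewrite nth_default //; lia.
- move=> H; rewrite leqNgt; apply/negP => Hs.
  have Hne : cval c != [::] by case: (cval c) Hs.
  have := canon_last (canonP c) Hne.
  have -> : (size (cval c)).-1 = (size (cval c)).-2.+1 by lia.
  by rewrite H.
Qed.

Lemma tails_sm s t : (forall j, cn s j.+1 = cn t j.+1) -> sm s = sm t.
Proof.
move=> E; apply/idP/idP => /smP H; apply/smP => j; [by rewrite -E H|by rewrite E H].
Qed.

Definition nz (c : cnf) := exists i, cn c i <> 0.

Lemma cn0 i : cn (mkc [::]) i = 0.
Proof. by rewrite cn_mkc nth_nil. Qed.

Lemma zero_lt t : ordlt ozero (OFin t) <-> nz t.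
Proof.
split.
- move/ltE => [i [Hi _]]; exists i; move: Hi; rewrite cn0; lia.
- move=> [i Hi]; apply/ltE.
  have Hne : cval t != [::] by move: Hi; rewrite /cn; case: (cval t) => //; rewrite nth_nil.
  have H0 := canon_last (canonP t) Hne.
  exists (size (cval t)).-1; split; first by rewrite cn0 /cn; lia.
  move=> j Hj; rewrite cn0 /cn nth_default //; lia.
Qed.

Lemma nlt_zero c : ~ ordlt c ozero.
Proof. case: c => [s|] //= /cltbP [i [Hi _]]; move: Hi; rewrite cn0; lia. Qed.

Definition psucc (s : cnf) := cadd s (mkc [:: 1]).
Definition ppred (s : cnf) := mkc ((cn s 0).-1 :: behead (cval s)).

Lemma cn_pred0 s : cn (ppred s) 0 = (cn s 0).-1.
Proof. by rewrite /ppred cn_mkc. Qed.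
Lemma cn_predS s i : cn (ppred s) i.+1 = cn s i.+1.
Proof. by rewrite /ppred cn_mkc /= nth_behead. Qed.

Lemma succ_pred s : cn s 0 <> 0 -> psucc (ppred s) = s.
Proof.
move=> H; apply: cnf_ext => [[|i]]; rewrite /psucc cn_succ /=.
- rewrite cn_pred0; lia.
- by rewrite cn_predS.
Qed.

Lemma succ_lt s : ordlt (OFin s) (OFin (psucc s)).
Proof.
apply/ltE; exists 0; split; first by rewrite cn_succ.
by move=> [|j] // _; rewrite cn_succ.
Qed.

Lemma succ_nb s c : ordlt (OFin s) c -> ordlt c (OFin (psucc s)) -> False.
Proof.
case: c => [c|] //= /cltbP [i [Hi He]] /cltbP [i' [Hi' He']].
move: Hi'; rewrite cn_succ => Hi'.
case: (ltngtP i i') => H.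
- have := He i' H. move: Hi'. case: eqP => [?|_]; lia.
- have := He' i H. rewrite cn_succ. case: eqP => [?|_]; lia.
- subst i'. move: Hi'; case: eqP => [?|_]; subst; lia.
Qed.

Definition Lim (b : ordw) := (exists c, ordlt c b) /\
  (forall c, ordlt c b -> exists d, ordlt c d /\ ordlt d b).

Lemma Lim_top : Lim OTop.
Proof.
split; first by exists ozero.
move=> [s|] // _; exists (OFin (psucc s)); split=> //; exact: succ_lt.
Qed.

Lemma Lim_fin t : Lim (OFin t) <-> nz t /\ cn t 0 = 0.
Proof.
split.
- move=> [[c Hc] HL]; split.
  + case: c Hc => [s|] // /ltE [i [Hi _]]; exists i; lia.
  + apply: NNPP => Hne.
    have Hp : ordlt (OFin (ppred t)) (OFin t).
      rewrite -{2}(succ_pred Hne); exact: succ_lt.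
    have [d [H1 H2]] := HL _ Hp.
    rewrite -(succ_pred Hne) in H2. exact: succ_nb H1 H2.
- move=> [Hnz H0]; split; first by exists ozero; apply/zero_lt.
  move=> [s|] // /ltE [i [Hi He]].
  exists (OFin (psucc s)); split; first exact: succ_lt.
  apply/ltE; exists i; rewrite !cn_succ.
  have Hi0 : i != 0 by apply/eqP => E; subst i; lia.
  rewrite (negbTE Hi0); split=> // j Hj.
  have Hj0 : j != 0 by lia.
  by rewrite cn_succ (negbTE Hj0) He.
Qed.

Definition Phi n a := omul (opow n) (oadd (onat 1) a).
Definition PhiC n s := cmul (mkc (rcons (nseq n 0) 1)) (cadd (mkc [:: 1]) s).

Lemma Phi_fin n s : Phi n (OFin s) = OFin (PhiC n s).
Proof. by []. Qed.

Lemma omul_top n : omul (opow n) OTop = OTop.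
Proof. by rewrite /omul /opow /= strip_pow; case: n. Qed.

Lemma Phi_top n : Phi n OTop = OTop.
Proof. exact: omul_top. Qed.

Lemma cn_PhiC n s i : cn (PhiC n s) i =
  if i < n then 0 else (if (i == n) && sm s then (cn s 0).+1 else cn s (i - n)).
Proof.
rewrite /PhiC cn_mulpow cn_oneplus.
case: (ltngtP i n) => H //.
- have -> : (i - n == 0) = false by lia. by [].
- by subst; rewrite subnn.
Qed.

Lemma sm_PhiC1 s : ~ sm (PhiC 1 s).
Proof.
move/smP => H.
case Hs: (sm s).
- have := H 0; rewrite cn_PhiC /= Hs. by [].
- move/negP: Hs; apply; apply/smP => j.
  have := H j.+1; rewrite cn_PhiC /=. by rewrite subn1.
Qed.

Lemma Phi_comp n a : 1 <= n -> Phi n (Phi 1 a) = Phi n.+1 a.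
Proof.
move=> Hn; case: a => [s|]; last by rewrite !Phi_top.
rewrite (Phi_fin 1) Phi_fin (Phi_fin n.+1); congr OFin; apply: cnf_ext => i.
rewrite !cn_PhiC.
have /negbTE -> : ~~ sm (PhiC 1 s) by apply/negP; exact: sm_PhiC1.
rewrite andbF.
case: (ltngtP i n) => H.
- have -> : i < n.+1 by lia. by [].
- have -> : (i - n < 1) = false by lia.
  have -> : (i < n.+1) = false by lia.
  have -> : (i - n == 1) = (i == n.+1) by lia.
  by have -> : i - n - 1 = i - n.+1 by lia.
- subst; by rewrite subnn (ltnSn n).
Qed.

Lemma Phi1_Lim a : Lim (Phi 1 a).
Proof.
case: a => [s|]; last by rewrite Phi_top; exact: Lim_top.
rewrite Phi_fin; apply/Lim_fin; split; last by rewrite cn_PhiC.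
apply: NNPP => Hnz; apply: (sm_PhiC1 (s := s)); apply/smP => j.
apply: NNPP => H; apply: Hnz; by exists j.+1.
Qed.

Lemma Lim_Phi1 b : Lim b -> exists a, Phi 1 a = b.
Proof.
case: b => [t|]; last by exists OTop; rewrite Phi_top.
move/Lim_fin => [Hnz H0].
pose u := mkc (behead (cval t)).
have Hu : forall j, cn u j = cn t j.+1 by move=> j; rewrite /u cn_mkc nth_behead.
case Hsm: (sm u).
- have Ht1 : cn t 1 <> 0.
    move=> E; case: Hnz => [[|[|j]] Hj]; [exact: Hj H0|exact: Hj E|].
    apply: Hj; rewrite -Hu. by move/smP: Hsm => ->.
  exists (OFin (mkc [:: (cn t 1).-1])); rewrite Phi_fin; congr OFin.
  have Hs1 : sm (mkc [:: (cn t 1).-1]).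
    apply/smP => j; by rewrite cn_mkc; case: j.
  apply: cnf_ext => -[|[|j]]; rewrite cn_PhiC.
  + by rewrite H0.
  + rewrite /= Hs1 cn_mkc /=; lia.
  + rewrite /= cn_mkc subn1 /= nth_nil -Hu. by move/smP: Hsm => ->.
- exists (OFin u); rewrite Phi_fin; congr OFin.
  apply: cnf_ext => -[|j]; rewrite cn_PhiC Hsm //= andbF subn1 /=.
  by rewrite Hu.
Qed.

Lemma Phi1_mono a b : ordlt a b -> ordlt (Phi 1 a) (Phi 1 b).
Proof.
case: a => [s|]; last by [].
case: b => [t|]; last by move=> _; rewrite Phi_top Phi_fin.
move/ltE => [i [Hi He]]; rewrite !Phi_fin; apply/ltE.
exists i.+1; rewrite !cn_PhiC /= !subn1 /=; split.
- case: i Hi He => [|i] Hi He /=; last by [].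
  have -> : sm s = sm t by apply: tails_sm => j; apply: He.
  by case: (sm t).
- move=> [|j] // Hj; rewrite !cn_PhiC /= !subn1 /=.
  have -> : (j.+1 == 1) = false by lia.
  by apply: He.
Qed.

Definition th0 a := if ordlt a omega then a else oadd a (onat 1).

Lemma lt_omega s : ordlt (OFin s) omega = sm s.
Proof.
have Hw : forall i, cn (mkc (rcons (nseq 1 0) 1)) i = nth 0 [:: 0; 1] i by move=> i; rewrite cn_mkc.
apply/idP/idP.
- move/cltbP => [i [Hi He]]; apply/smP => j.
  case: i Hi He => [|[|i]] Hi He; rewrite Hw in Hi.
  + by [].
  + case: j => [|j]; first by move: Hi => /=; lia.
    by rewrite He // Hw; case: j.
  + by move: Hi; rewrite /= nth_nil.
- move/smP => H; apply/cltbP; exists 1; rewrite Hw H; split => //.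
  move=> [|[|j]] // _; rewrite Hw H /=. by case: j.
Qed.

Lemma th0_fin s : th0 (OFin s) = if sm s then OFin s else OFin (psucc s).
Proof. by rewrite /th0 lt_omega. Qed.

Lemma sm_succ s : sm (psucc s) = sm s.
Proof. by apply: tails_sm => j; rewrite cn_succ. Qed.

Lemma th0_nLim a : ordlt a OTop -> ~ Lim (th0 a).
Proof.
case: a => [s|] // _; rewrite th0_fin; case Hs: (sm s) => /Lim_fin [[i Hi] H0].
- case: i Hi => [|i] Hi //. by move/smP: Hs Hi => ->.
- by rewrite cn_succ in H0.
Qed.

Lemma nLim_th0 b : ~ Lim b -> exists a, ordlt a OTop /\ th0 a = b.
Proof.
case: b => [t|]; last by move=> H; exfalso; apply: H; exact: Lim_top.
move=> HL; case Ht: (sm t).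
- by exists (OFin t); rewrite th0_fin Ht.
- have Hnz : nz t.
    apply: NNPP => Hn; move/negP: Ht; apply; apply/smP => j.
    apply: NNPP => Hj; apply: Hn; by exists j.+1.
  have H0 : cn t 0 <> 0 by move=> H0; apply: HL; apply/Lim_fin.
  exists (OFin (ppred t)); split => //; rewrite th0_fin.
  have -> : sm (ppred t) = false by rewrite -Ht; apply: tails_sm => j; rewrite cn_predS.
  by rewrite succ_pred.
Qed.

Lemma th0_mono a b : ordlt a OTop -> ordlt b OTop -> ordlt a b -> ordlt (th0 a) (th0 b).
Proof.
case: a => [s|] // _; case: b => [t|] // _.
move=> Hst; have := Hst; move/ltE => [i [Hi He]].
have Hi0 : sm s != sm t -> i != 0.
  move=> Hne; apply/eqP => E; subst i; move/negP: Hne; apply.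
  by apply/eqP; apply: tails_sm => j; apply: He.
rewrite !th0_fin; case Hs: (sm s); case Ht: (sm t) => //.
- apply/ltE; exists i; rewrite cn_succ; have := Hi0; rewrite Hs Ht => /(_ isT) /negbTE ->.
  split => // j Hj; rewrite cn_succ.
  have -> : (j == 0) = false by lia. exact: He.
- exfalso; have := Hi0; rewrite Hs Ht => /(_ isT).
  clear Hi0; case: i Hi He => [|i] Hi He // _. by move/smP: Ht Hi => ->.
- apply/ltE; exists i; rewrite !cn_succ; split.
  + case: eqP => [E|_] //; subst i; by rewrite ltnS.
  + move=> j Hj; rewrite !cn_succ. have -> : (j == 0) = false by lia. exact: He.
Qed.

Lemma Phi_th0 u a : ordlt a OTop -> Phi u (th0 a) = omul (opow u) (oadd a (onat 1)).
Proof.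
case: a => [s|] // _; rewrite th0_fin.
have E : omul (opow u) (oadd (OFin s) (onat 1)) = OFin (cmul (mkc (rcons (nseq u 0) 1)) (psucc s)) by [].
rewrite E; case Hs: (sm s); rewrite Phi_fin; congr OFin; apply: cnf_ext => i;
  rewrite cn_PhiC cn_mulpow ?sm_succ Hs ?andbF ?andbT.
- case: (ltngtP i u) => H //.
  + rewrite cn_succ. by have -> : (i - u == 0) = false by lia.
  + by subst; rewrite subnn cn_succ.
- by [].
Qed.
Section RealPart.
Local Open Scope R_scope.

Definition closedL (L : R -> Prop) :=
  forall z, (forall eps, 0 < eps -> exists y, L y /\ Rabs (y - z) < eps) -> L z.

Lemma compact_closedL K : compact K -> closedL K.
Proof.
intros HK z Hz. pose proof (compact_P2 _ HK) as Hc. apply NNPP; intro Hnz.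
destruct (Hc z Hnz) as [del Hdel].
destruct (Hz del (cond_pos del)) as [y [Ky Hy]].
exact (Hdel y Hy Ky).
Qed.

Lemma derived_closed L : closedL (derived L).
Proof.
intros z Hz eps Heps.
destruct (Hz (eps/2)) as [y [Dy Hy]]; [lra|].
destruct (Req_dec y z) as [E|Ne].
- subst y. destruct (Dy (eps/2)) as [w [Lw [Hw1 Hw2]]]; [lra|].
  exists w; split; [exact Lw|split; [exact Hw1|lra]].
- assert (Hd : 0 < Rmin (eps/2) (Rabs (y - z))).
  { apply Rmin_pos; [lra|]. apply Rabs_pos_lt. lra. }
  destruct (Dy _ Hd) as [w [Lw [Hw1 Hw2]]].
  pose proof (Rmin_l (eps/2) (Rabs (y - z))).
  pose proof (Rmin_r (eps/2) (Rabs (y - z))).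
  exists w; split; [exact Lw|split].
  + intro E; subst w. rewrite Rabs_minus_sym in Hw2. lra.
  + split_Rabs; lra.
Qed.

Lemma closed_derived_sub L x : closedL L -> derived L x -> L x.
Proof.
intros Hc Hd; apply Hc; intros eps Heps.
destruct (Hd eps Heps) as [y [Ly [_ Hy]]]; exists y; auto.
Qed.

Definition sto := (forall a, ~ ordlt a a) /\
  (forall a b c, ordlt a b -> ordlt b c -> ordlt a c) /\
  (forall a b, a = b \/ ordlt a b \/ ordlt b a).

Lemma iso_sto L g : rev_iso L (fun _ => True) g -> sto.
Proof.
intros [_ [Hs Ho]]. split; [|split].
- intros a Ha. destruct (Hs a I) as [x [Lx Ex]]. subst a.
  apply (proj2 (Ho x x Lx Lx)) in Ha. lra.
- intros a b c Hab Hbc.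
  destruct (Hs a I) as [xa [La Ea]]; destruct (Hs b I) as [xb [Lb Eb]];
  destruct (Hs c I) as [xc [Lc Ec]]; subst a b c.
  apply (proj2 (Ho _ _ La Lb)) in Hab. apply (proj2 (Ho _ _ Lb Lc)) in Hbc.
  apply (proj1 (Ho _ _ La Lc)). lra.
- intros a b.
  destruct (Hs a I) as [xa [La Ea]]; destruct (Hs b I) as [xb [Lb Eb]]; subst a b.
  destruct (Rtotal_order xa xb) as [H|[H|H]].
  + right; right. apply (proj1 (Ho _ _ Lb La)). exact H.
  + left; subst; reflexivity.
  + right; left. apply (proj1 (Ho _ _ La Lb)). exact H.
Qed.

Lemma kpos_of L P g x : rev_iso L P g -> L x -> (forall b, ordlt b (g x) -> P b) ->
  kpos L (g x) x.
Proof.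
intros [H1 [H2 H3]] Lx HP. split; [exact Lx|]. exists g. split; [|split].
- intros y [Ly Hy]. exact (proj1 (H3 y x Ly Lx) Hy).
- intros b Hb. destruct (H2 b (HP b Hb)) as [y [Ly Ey]]. exists y; split; [|exact Ey].
  split; [exact Ly|]. apply (proj2 (H3 y x Ly Lx)). rewrite Ey; exact Hb.
- intros y z [Ly _] [Lz _]. exact (H3 y z Ly Lz).
Qed.

Lemma deriv_char L g : closedL L -> rev_iso L (fun _ => True) g ->
  forall x, derived L x <-> L x /\ Lim (g x).
Proof.
intros Hc Hiso. pose proof (iso_sto Hiso) as [Hirr [Htr Htot]].
destruct Hiso as [_ [Hs Ho]]. intro x. split.
- intro H. assert (Lx : L x) by (exact (closed_derived_sub Hc H)).
  assert (Above : forall eps, 0 < eps -> exists y, L y /\ x < y /\ y < x + eps).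
  { intros eps Heps. destruct (g x) as [s|] eqn:Eg.
    - destruct (Hs (OFin (psucc s)) I) as [x' [Lx' Ex']].
      assert (Hx' : x' < x).
      { apply (proj2 (Ho _ _ Lx Lx')). rewrite Eg Ex'. exact (succ_lt s). }
      assert (Hd : 0 < Rmin eps (x - x')) by (apply Rmin_pos; lra).
      pose proof (Rmin_l eps (x - x')). pose proof (Rmin_r eps (x - x')).
      destruct (H _ Hd) as [y [Ly [Hyx Hy]]]. exists y. split; [exact Ly|].
      destruct (Rtotal_order y x) as [Hlt|[Heq|Hgt]].
      + exfalso. assert (x' < y) by (split_Rabs; lra).
        pose proof (proj1 (Ho _ _ Lx Ly) Hlt) as A1.
        pose proof (proj1 (Ho _ _ Ly Lx') H2) as A2.
        rewrite Eg in A1. rewrite Ex' in A2. exact (succ_nb A1 A2).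
      + contradiction.
      + split; [exact Hgt|split_Rabs; lra].
    - destruct (H eps Heps) as [y [Ly [Hyx Hy]]]. exists y. split; [exact Ly|].
      destruct (Rtotal_order y x) as [Hlt|[Heq|Hgt]].
      + pose proof (proj1 (Ho _ _ Lx Ly) Hlt) as A1. rewrite Eg in A1. discriminate A1.
      + contradiction.
      + split; [exact Hgt|split_Rabs; lra]. }
  split; [exact Lx|split].
  + destruct (Above 1 Rlt_0_1) as [y [Ly [Hy _]]]. exists (g y).
    exact (proj1 (Ho _ _ Ly Lx) Hy).
  + intros c Hcx. destruct (Hs c I) as [z [Lz Ez]]. subst c.
    assert (Hxz : x < z) by exact (proj2 (Ho _ _ Lz Lx) Hcx).
    destruct (Above (z - x)) as [y [Ly [Hy1 Hy2]]]; [lra|].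
    exists (g y); split.
    * apply (proj1 (Ho _ _ Lz Ly)). lra.
    * exact (proj1 (Ho _ _ Ly Lx) Hy1).
- intros [Lx [[c Hcx] HL]].
  destruct (Hs c I) as [z0 [Lz0 Ez0]]. subst c.
  assert (Hxz0 : x < z0) by exact (proj2 (Ho _ _ Lz0 Lx) Hcx).
  set (E := fun v => L (- v) /\ x < - v).
  assert (Hb : bound E).
  { exists (- x). intros v [_ Hv]. lra. }
  assert (Hne : exists v, E v).
  { exists (- z0). unfold E. rewrite Ropp_involutive. auto. }
  destruct (completeness E Hb Hne) as [l [Hub Hlub]].
  set (m := - l).
  assert (Hmx : x <= m).
  { unfold m. assert (l <= - x); [|lra]. apply Hlub. intros v [_ Hv]. lra. }
  assert (Hlow : forall y, L y -> x < y -> m <= y).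
  { intros y Ly Hy. unfold m. assert (- y <= l); [|lra]. apply Hub. unfold E.
    rewrite Ropp_involutive. auto. }
  assert (Happ : forall eps, 0 < eps -> exists y, L y /\ x < y /\ y < m + eps).
  { intros eps Heps. apply NNPP; intro Hn.
    assert (l <= l - eps); [|lra].
    apply Hlub. intros v [Lv Hv]. apply Rnot_lt_le; intro Hlt.
    apply Hn. exists (- v). split; [exact Lv|split; [exact Hv|unfold m; lra]]. }
  assert (Lm : L m).
  { apply Hc. intros eps Heps. destruct (Happ eps Heps) as [y [Ly [Hy1 Hy2]]].
    exists y. split; [exact Ly|]. pose proof (Hlow y Ly Hy1). split_Rabs; lra. }
  assert (Hm : m = x).
  { destruct (Rle_lt_or_eq_dec _ _ Hmx) as [Hlt|Heq]; [|auto].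
    exfalso. pose proof (proj1 (Ho _ _ Lm Lx) Hlt) as A.
    destruct (HL _ A) as [d [Hd1 Hd2]].
    destruct (Hs d I) as [w [Lw Ew]]. subst d.
    assert (x < w) by exact (proj2 (Ho _ _ Lw Lx) Hd2).
    assert (w < m) by exact (proj2 (Ho _ _ Lm Lw) Hd1).
    pose proof (Hlow w Lw H). lra. }
  intros eps Heps. destruct (Happ eps Heps) as [y [Ly [Hy1 Hy2]]].
  exists y. split; [exact Ly|split; [lra|split_Rabs; lra]].
Qed.

Lemma iso_comp L g (M : R -> Prop) (P : ordw -> Prop) (phi : ordw -> ordw) :
  sto -> rev_iso L (fun _ => True) g ->
  (forall x, M x <-> L x /\ exists a, P a /\ phi a = g x) ->
  (forall a b, P a -> P b -> ordlt a b -> ordlt (phi a) (phi b)) ->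
  exists h, rev_iso M P h /\ (forall x, M x -> g x = phi (h x)).
Proof.
intros [Hirr [Htr Htot]] [_ [Hs Ho]] HM Hmono.
set (h := fun x => epsilon (inhabits OTop) (fun a => P a /\ phi a = g x)).
assert (Hh : forall x, M x -> P (h x) /\ phi (h x) = g x).
{ intros x Mx. apply (epsilon_spec (inhabits OTop) (fun a => P a /\ phi a = g x)).
  exact (proj2 (proj1 (HM x) Mx)). }
assert (Hrefl : forall a b, P a -> P b -> ordlt (phi a) (phi b) -> ordlt a b).
{ intros a b Pa Pb H. destruct (Htot a b) as [E|[E|E]]; [subst; exfalso; exact (Hirr _ H)|exact E|].
  exfalso. apply (Hirr (phi a)). exact (Htr _ _ _ H (Hmono _ _ Pb Pa E)). }
exists h. split; [split; [|split]|].
- intros x Mx. exact (proj1 (Hh x Mx)).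
- intros b Pb. destruct (Hs (phi b) I) as [x [Lx Ex]].
  assert (Mx : M x) by (apply HM; split; [exact Lx|exists b; auto]).
  exists x; split; [exact Mx|].
  destruct (Hh x Mx) as [P1 P2].
  destruct (Htot (h x) b) as [E|[E|E]]; [exact E| |]; exfalso.
  + apply (Hirr (phi b)). rewrite <- Ex at 1. rewrite <- P2. exact (Hmono _ _ P1 Pb E).
  + apply (Hirr (phi b)). rewrite <- Ex at 2. rewrite <- P2. exact (Hmono _ _ Pb P1 E).
- intros x y Mx My.
  destruct (Hh x Mx) as [Px Ex]; destruct (Hh y My) as [Py Ey].
  assert (Lx : L x) by exact (proj1 (proj1 (HM x) Mx)).
  assert (Ly : L y) by exact (proj1 (proj1 (HM y) My)).
  rewrite (Ho x y Lx Ly). rewrite <- Ex, <- Ey. split.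
  + exact (Hrefl _ _ Px Py).
  + exact (Hmono _ _ Px Py).
- intros x Mx. symmetry. exact (proj2 (Hh x Mx)).
Qed.

Lemma derivs K f : closedL K -> rev_iso K (fun _ => True) f -> forall n,
  exists g, rev_iso (deriv_n n K) (fun _ => True) g /\ closedL (deriv_n n K) /\
   (forall x, deriv_n n K x -> K x) /\
   (forall x, deriv_n n K x -> f x = (if n is 0 then g x else Phi n (g x))).
Proof.
intros Hc Hf. pose proof (iso_sto Hf) as Hsto. induction n as [|n IH].
- exists f. split; [exact Hf|split; [exact Hc|split; auto]].
- destruct IH as [g [Hg [Hcn [Hsub Hfx]]]].
  destruct (@iso_comp (deriv_n n K) g (deriv_n n.+1 K) (fun _ => True) (Phi 1) Hsto Hg)
    as [h [Hh Hgh]].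
  + intro x. simpl. rewrite (deriv_char Hcn Hg x). split.
    * intros [Lx HL]. split; [exact Lx|]. destruct (Lim_Phi1 HL) as [a Ea]. exists a; auto.
    * intros [Lx [a [_ Ea]]]. split; [exact Lx|]. rewrite <- Ea. apply Phi1_Lim.
  + intros a b _ _. apply Phi1_mono.
  + exists h. split; [exact Hh|split; [apply derived_closed|split]].
    * intros x Hx. apply Hsub. exact (closed_derived_sub Hcn Hx).
    * intros x Hx. assert (Lx : deriv_n n K x) by exact (closed_derived_sub Hcn Hx).
      rewrite (Hfx x Lx) (Hgh x Hx). destruct n as [|n]; [reflexivity|].
      apply Phi_comp. by [].
Qed.

Lemma Tset_char L g : closedL L -> rev_iso L (fun _ => True) g ->
  forall x, (L x /\ ~ derived L x) <-> L x /\ exists a, ordlt a OTop /\ th0 a = g x.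
Proof.
intros Hc Hg x. rewrite (deriv_char Hc Hg x). split.
- intros [Lx Hn]. split; [exact Lx|]. apply nLim_th0. intro HL; apply Hn; auto.
- intros [Lx [a [Ha Ea]]]. split; [exact Lx|]. intros [_ HL]. rewrite <- Ea in HL.
  exact (th0_nLim Ha HL).
Qed.

End RealPart.
Theorem mainTheorem3 (K : R -> Prop) (rho : R) (mu : nat) :
  self_similar K rho mu ->
  (forall (n : nat) (a : ordw), (1 <= n)%N ->
     exists x, kpos (deriv_n n K) a x /\
               kpos K (omul (opow n) (oadd (onat 1) a)) x) /\
  (forall a : ordw, ordlt a OTop ->
     exists x, kpos (Tset K 0) a x /\
               kpos K (if ordlt a omega then a else oadd a (onat 1)) x) /\
  (forall (u : nat) (a : ordw), (1 <= u)%N -> ordlt a OTop ->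
     exists x, kpos (Tset K u) a x /\
               kpos K (omul (opow u) (oadd a (onat 1))) x).
Proof.
intros [_ [Hcomp [_ [_ [f Hf]]]]].
pose proof (compact_closedL Hcomp) as Hc.
pose proof (iso_sto Hf) as Hsto.
assert (HT : forall u, exists h, rev_iso (Tset K u) (fun a => ordlt a OTop) h /\
   (forall x, Tset K u x -> K x /\ f x = (if u is 0 then th0 (h x) else Phi u (th0 (h x))))).
{ intro u. destruct (derivs Hc Hf u) as [g [Hg [Hcn [Hsub Hfx]]]].
  destruct (@iso_comp (deriv_n u K) g (Tset K u) (fun a => ordlt a OTop) th0 Hsto Hg)
    as [h [Hh Hgh]].
  - intro x. exact (Tset_char Hcn Hg x).
  - intros a b Ha Hb. exact (th0_mono Ha Hb).
  - exists h. split; [exact Hh|]. intros x Hx. split; [exact (Hsub x (proj1 Hx))|].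
    rewrite (Hfx x (proj1 Hx)) (Hgh x Hx). by destruct u. }
assert (HP : forall x, K x -> forall b, ordlt b (f x) -> True) by auto.
split; [|split].
- intros n a Hn. destruct (derivs Hc Hf n) as [g [Hg [Hcn [Hsub Hfx]]]].
  destruct Hg as [Hg1 [Hg2 Hg3]].
  destruct (Hg2 a I) as [x [Lx Ex]]. exists x. split.
  + rewrite <- Ex. apply (@kpos_of _ (fun _ => True)); [split; auto|exact Lx|auto].
  + rewrite (_ : omul (opow n) (oadd (onat 1) a) = f x).
    * apply (@kpos_of _ (fun _ => True)); [exact Hf|exact (Hsub x Lx)|auto].
    * rewrite (Hfx x Lx) Ex. destruct n; [discriminate|reflexivity].
- intros a Ha. destruct (HT 0%N) as [h [Hh Hfh]].
  destruct Hh as [Hh1 [Hh2 Hh3]].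
  destruct (Hh2 a Ha) as [x [Tx Ex]]. exists x.
  destruct (Hfh x Tx) as [Kx Efx]. split.
  + rewrite <- Ex. apply (@kpos_of _ (fun a => ordlt a OTop)); [split; auto|exact Tx|].
    intros b Hb. destruct b; [reflexivity|discriminate Hb].
  + change (kpos K (th0 a) x). rewrite <- Ex, <- Efx.
    apply (@kpos_of _ (fun _ => True)); [exact Hf|exact Kx|auto].
- intros u a Hu Ha. destruct (HT u) as [h [Hh Hfh]].
  destruct Hh as [Hh1 [Hh2 Hh3]].
  destruct (Hh2 a Ha) as [x [Tx Ex]]. exists x.
  destruct (Hfh x Tx) as [Kx Efx]. split.
  + rewrite <- Ex. apply (@kpos_of _ (fun a => ordlt a OTop)); [split; auto|exact Tx|].
    intros b Hb. destruct b; [reflexivity|discriminate Hb].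
  + rewrite <- (Phi_th0 u Ha). rewrite <- Ex.
    replace (Phi u (th0 (h x))) with (f x).
    * apply (@kpos_of _ (fun _ => True)); [exact Hf|exact Kx|auto].
    * rewrite Efx. destruct u; [discriminate|reflexivity].
Qed.
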